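(* Let $\mathfrak g$ be a finite-dimensional Lie algebra over a field $k$ of characteristic zero and let $(A,\cdot)$ be an LR-structure on $\mathfrak g$. Consider the statements: (a) all left multiplications $L(x)$, $x\in A$, are nilpotent; (b) all right multiplications $R(x)$, $x\in A$, are nilpotent; (c) $\mathfrak g$ is nilpotent. Then any two of (a), (b), (c) imply the third.
   Context: An LR-algebra is a vector space $A$ with a bilinear product $\cdot$ satisfying $x\cdot(y\cdot z)=y\cdot(x\cdot z)$ and $(x\cdot y)\cdot z=(x\cdot z)\cdot y$ for all $x,y,z\in A$. An LR-structure on a Lie algebra $\mathfrak g$ is an LR-algebra product $\cdot$ on the underlying vector space $A$ of $\mathfrak g$ such that $x\cdot y-y\cdot x=[x,y]$ for all $x,y$. $L(x)y=x\cdot y$ and $R(x)y=y\cdot x$. *)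

(* Defs.v *)
From HB Require Import structures.
From mathcomp Require Import all_boot all_order all_algebra.
Set Implicit Arguments. Unset Strict Implicit. Unset Printing Implicit Defensive.
Import GRing.Theory.
Local Open Scope ring_scope.

Section LR.
Variables (K : fieldType) (V : vectType K).

Definition bilinear_op (p : V -> V -> V) : Prop :=
  (forall (a : K) (x y z : V), p (a *: x + y) z = a *: p x z + p y z) /\
  (forall (a : K) (x y z : V), p x (a *: y + z) = a *: p x y + p x z).

Definition is_lie_bracket (br : V -> V -> V) : Prop :=
  [/\ bilinear_op br,
      (forall x, br x x = 0) &
      (forall x y z, br x (br y z) + br y (br z x) + br z (br x y) = 0)].

Definition is_LR_algebra (m : V -> V -> V) : Prop :=
  [/\ bilinear_op m,
      (forall x y z, m x (m y z) = m y (m x z)) &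
      (forall x y z, m (m x y) z = m (m x z) y)].

Definition is_LR_structure (br m : V -> V -> V) : Prop :=
  is_LR_algebra m /\ (forall x y, m x y - m y x = br x y).

Definition nilpotent_map (f : V -> V) : Prop :=
  exists n : nat, forall v, iter n f v = 0.

Definition Lmul (m : V -> V -> V) (x : V) : V -> V := fun y => m x y.
Definition Rmul (m : V -> V -> V) (x : V) : V -> V := fun y => m y x.

Definition iter_bracket (br : V -> V -> V) (xs : seq V) (y : V) : V :=
  foldr (fun x v => br x v) y xs.

(* g is nilpotent: the lower central series g^1 = g, g^{k+1} = [g, g^k]
   reaches 0, i.e. all iterated brackets of some fixed length vanish. *)
Definition lie_nilpotent (br : V -> V -> V) : Prop :=
  exists n : nat, forall (xs : seq V) (y : V), size xs = n -> iter_bracket br xs y = 0.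

End LR.

(* Main.v *)
Require Import Defs.
From HB Require Import structures.
From mathcomp Require Import all_boot all_order all_algebra.
Import GRing.Theory.
Local Open Scope ring_scope.

Section Helpers.
Variables (K : fieldType) (V : vectType K).

Definition lnr (f : V -> V) := forall (a : K) u w, f (a *: u + w) = a *: f u + f w.

Lemma lnr0 f : lnr f -> f 0 = 0.
Proof. move=> h; have := h 1 0 0; rewrite !scale1r addr0 => e.
by apply: (addrI (f 0)); rewrite addr0 -e. Qed.
Lemma lnrD f : lnr f -> forall u w, f (u + w) = f u + f w.
Proof. move=> h u w; have := h 1 u w; by rewrite !scale1r. Qed.
Lemma lnrZ f : lnr f -> forall a u, f (a *: u) = a *: f u.
Proof. move=> h a u; have := h a u 0; by rewrite (@lnr0 f h) !addr0. Qed.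
Lemma lnrN f : lnr f -> forall u, f (- u) = - f u.
Proof. move=> h u; by rewrite -scaleN1r lnrZ // scaleN1r. Qed.
Lemma lnrB f : lnr f -> forall u w, f (u - w) = f u - f w.
Proof. move=> h u w; by rewrite lnrD // lnrN. Qed.

Section Comm.
Variable op : V -> V -> V.
Hypothesis lin1 : forall (a : K) x y v, op (a *: x + y) v = a *: op x v + op y v.
Hypothesis lin2 : forall x, lnr (op x).
Hypothesis comm : forall x y v, op x (op y v) = op y (op x v).
Hypothesis nil : forall x, exists n, forall v, iter n (op x) v = 0.

Lemma op0l v : op 0 v = 0.
Proof. have := lin1 1 0 0 v; rewrite !scale1r addr0 => e.
by apply: (addrI (op 0 v)); rewrite addr0 -e. Qed.

Lemma fold_lin s a u w : foldr op (a *: u + w) s = a *: foldr op u s + foldr op w s.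
Proof. elim: s => [|x s IH] //=. by rewrite IH lin2. Qed.
Lemma fold0 s : foldr op 0 s = 0.
Proof. elim: s => [|x s IH] //=. by rewrite IH lnr0. Qed.
Lemma iter_lin y i a u w : iter i (op y) (a *: u + w) = a *: iter i (op y) u + iter i (op y) w.
Proof. elim: i => [|i IH] //=. by rewrite IH lin2. Qed.
Lemma iter0 y i : iter i (op y) 0 = 0.
Proof. elim: i => [|i IH] //=. by rewrite IH lnr0. Qed.
Lemma fold_comm s g v : foldr op (op g v) s = op g (foldr op v s).
Proof. elim: s => [|x s IH] //=. by rewrite IH comm. Qed.

Lemma key (s : V) (S : seq V) n N' :
  (forall v, iter n (op s) v = 0) ->
  (forall xs z, all (fun a => a \in <<S>>%VS) xs -> (N' <= size xs)%N -> foldr op z xs = 0) ->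
  forall l i gs z, all (fun a => a \in <<s :: S>>%VS) l -> all (fun a => a \in <<S>>%VS) gs ->
   (n + N' <= i + size gs + size l)%N -> iter i (op s) (foldr op (foldr op z l) gs) = 0.
Proof.
move=> hn hN; elim=> [|a l IH] i gs z /=.
- move=> _ hgs; rewrite addn0 => hle.
  case: (leqP N' (size gs)) => hg.
  + by rewrite hN // iter0.
  + have hi : (n <= i)%N.
      rewrite -(leq_add2r N'); apply: leq_trans hle _; rewrite leq_add2l ltnW //.
    by rewrite -(subnK hi) iterD hn iter0.
- case/andP=> ha hl hgs hle.
  have : a \in (<[s]> + <<S>>)%VS by rewrite -span_cons.
  case/memv_addP=> b /vlineP [c ->] [g hg ->].
  rewrite lin1 fold_lin iter_lin fold_comm -iterSr.
  rewrite IH //; last by rewrite addnS -addSn in hle.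
  rewrite -[op g _]/(foldr op _ [:: g]) -foldr_cat IH //.
  + by rewrite scaler0 add0r.
  + by rewrite all_cat hgs /= hg.
  + by move: hle; rewrite size_cat /= addn1 !addnS addSn.
Qed.

Lemma nil_bound : exists N, forall xs z, (N <= size xs)%N -> foldr op z xs = 0.
Proof.
suff H : forall S, exists N, forall xs z, all (fun a => a \in <<S>>%VS) xs ->
    (N <= size xs)%N -> foldr op z xs = 0.
  have [N HN] := H (vbasis fullv); exists N => xs z hle; apply: HN hle.
  by apply/allP => a _; rewrite (span_basis (vbasisP fullv)) memvf.
elim=> [|s S [N' hN']].
- exists 1%N => [[|a xs]] z //= /andP[ha _] _.
  by move: ha; rewrite span_nil memv0 => /eqP ->; exact: op0l.
- have [n hn] := nil s; exists (n + N')%N => xs z has hle.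
  by have := @key s S n N' hn hN' xs 0 [::] z has isT; rewrite add0n /=; apply.
Qed.
End Comm.
End Helpers.
Arguments lnr {K V}.
Arguments lnr0 {K V}.
Arguments lnrD {K V}.
Arguments lnrZ {K V}.
Arguments lnrN {K V}.
Arguments lnrB {K V}.
Arguments nil_bound {K V}.

Section Main.
Variables (K : fieldType) (V : vectType K) (br m : V -> V -> V).
Hypothesis m1 : forall (a : K) x y z, m (a *: x + y) z = a *: m x z + m y z.
Hypothesis m2 : forall (a : K) x y z, m x (a *: y + z) = a *: m x y + m x z.
Hypothesis lc : forall x y z, m x (m y z) = m y (m x z).
Hypothesis rc : forall x y z, m (m x y) z = m (m x z) y.
Hypothesis hbr : forall x y, m x y - m y x = br x y.

Lemma lnrL x : lnr (m x). Proof. move=> a u w; exact: m2. Qed.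
Lemma lnrR x : lnr (fun v => m v x). Proof. move=> a u w; exact: m1. Qed.
Lemma lnrB' x : lnr (br x).
Proof. move=> a u w; rewrite -!hbr m2 m1 scalerBr opprD addrACA -scalerBr //. Qed.

Definition app (w : seq (bool * V)) z :=
  foldr (fun p v => if p.1 then m p.2 v else m v p.2) z w.

Lemma wordL w z : exists xs z', (count fst w <= size xs)%N /\ app w z = foldr m z' xs.
Proof.
elim: w => [|[b x] w [xs [z' [hs he]]]]; first by exists [::], z.
rewrite /= he; case: b.
- exists (x :: xs), z'; split => //=; by rewrite add1n ltnS.
- case: xs hs he => [|a xs] hs he.
  + exists [:: z'], x; split => //=; exact: leq_trans hs _.
  + exists (m a x :: xs), z'; split => //=; by rewrite rc.
Qed.

Lemma wordR w z : exists xs z', (count (predC fst) w <= size xs)%N /\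
   app w z = foldr (fun a v => m v a) z' xs.
Proof.
elim: w => [|[b x] w [xs [z' [hs he]]]]; first by exists [::], z.
rewrite /= he; case: b.
- case: xs hs he => [|a xs] hs he.
  + exists [:: z'], x; split => //=; exact: leq_trans hs _.
  + exists (m x a :: xs), z'; split => //=; by rewrite lc.
- exists (x :: xs), z'; split => //=; by rewrite add1n ltnS.
Qed.

Lemma words_vanish NL NR :
  (forall xs z, (NL <= size xs)%N -> foldr m z xs = 0) ->
  (forall xs z, (NR <= size xs)%N -> foldr (fun a v => m v a) z xs = 0) ->
  forall w z, (NL + NR <= size w)%N -> app w z = 0.
Proof.
move=> hL hR w z hs.
case: (leqP NL (count fst w)) => hc.
- have [xs [z' [h1 ->]]] := wordL w z; apply: hL; exact: leq_trans h1.
- have [xs [z' [h1 ->]]] := wordR w z; apply: hR; apply: leq_trans h1.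
  rewrite -(leq_add2l (count fst w)) count_predC.
  apply: leq_trans hs; rewrite leq_add2r ltnW //.
Qed.

Inductive Sk (k : nat) : V -> Prop :=
 | S0 : Sk k 0
 | Ssub u v : Sk k u -> Sk k v -> Sk k (u - v)
 | Sw w z : size w = k -> Sk k (app w z).

Lemma SkL k x v : Sk k v -> Sk k.+1 (m x v).
Proof.
elim=> [|u w _ hu _ hw|w z hs].
- rewrite (lnr0 _ (lnrL x)); exact: S0.
- rewrite (lnrB _ (lnrL x)); exact: Ssub.
- have -> : m x (app w z) = app ((true, x) :: w) z by [].
  by apply: Sw; rewrite /= hs.
Qed.

Lemma SkR k x v : Sk k v -> Sk k.+1 (m v x).
Proof.
elim=> [|u w _ hu _ hw|w z hs].
- rewrite (lnr0 _ (lnrR x)); exact: S0.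
- rewrite (lnrB _ (lnrR x)); exact: Ssub.
- have -> : m (app w z) x = app ((false, x) :: w) z by [].
  by apply: Sw; rewrite /= hs.
Qed.

Lemma Sk_br xs y : Sk (size xs) (iter_bracket br xs y).
Proof.
elim: xs => [|x xs IH] /=; first by have := @Sw 0 [::] y; apply.
rewrite -hbr; apply: Ssub; [exact: SkL | exact: SkR].
Qed.

Lemma Sk_zero k NL NR :
  (forall xs z, (NL <= size xs)%N -> foldr m z xs = 0) ->
  (forall xs z, (NR <= size xs)%N -> foldr (fun a v => m v a) z xs = 0) ->
  (NL + NR <= k)%N -> forall v, Sk k v -> v = 0.
Proof.
move=> hL hR hk v; elim=> [|u w _ -> _ ->|w z hs] //.
- by rewrite subr0.
- by apply: (@words_vanish NL NR hL hR w z); rewrite hs.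
Qed.

Inductive Wj (j : nat) : V -> Prop :=
 | W0 : Wj j 0
 | Wadd u v : Wj j u -> Wj j v -> Wj j (u + v)
 | Wopp u : Wj j u -> Wj j (- u)
 | Wbr xs y : size xs = j -> Wj j (iter_bracket br xs y).

Lemma Wsub j u v : Wj j u -> Wj j v -> Wj j (u - v).
Proof. by move=> hu hv; apply: Wadd => //; apply: Wopp. Qed.

Lemma Wlin j (f : V -> V) (k : nat) : lnr f ->
  (forall xs y, size xs = j -> Wj k (f (iter_bracket br xs y))) ->
  forall v, Wj j v -> Wj k (f v).
Proof.
move=> hf hg v; elim=> [|u w _ hu _ hw|u _ hu|xs y hs].
- rewrite (lnr0 _ hf); exact: W0.
- rewrite (lnrD _ hf); exact: Wadd.
- rewrite (lnrN _ hf); exact: Wopp.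
- exact: hg.
Qed.

Lemma Wad j x v : Wj j v -> Wj j.+1 (br x v).
Proof.
move: v; apply: (@Wlin j _ j.+1 (lnrB' x)) => xs y hs.
have -> : br x (iter_bracket br xs y) = iter_bracket br (x :: xs) y by [].
by apply: Wbr; rewrite /= hs.
Qed.

Lemma Wall v : Wj 0 v.
Proof. by have := @Wbr 0 [::] v; apply. Qed.

Lemma Wmono j v : Wj j.+1 v -> Wj j v.
Proof.
have hid : lnr (fun v : V => v) by [].
move: v; apply: (@Wlin j.+1 _ j hid) => xs y hs.
case/lastP: xs hs => [|ys x] //; rewrite size_rcons => -[hs].
rewrite /iter_bracket foldr_rcons; exact: Wbr.
Qed.

Lemma WL j x v : Wj j v -> Wj j (m x v).
Proof.
move: v; apply: (@Wlin j _ j (lnrL x)) => xs y <-.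
elim: xs => [|z xs IH] /=; first by have := @Wbr 0 [::] (m x y); apply.
have -> : m x (br z (iter_bracket br xs y)) =
  br z (m x (iter_bracket br xs y)) + iter_bracket br (m x z :: xs) y.
  rewrite /= -!hbr (lnrB _ (lnrL x)) (lc x z) (lc x (iter_bracket br xs y) z).
  by rewrite (rc x (iter_bracket br xs y) z) addrA subrK.
apply: Wadd; first exact: Wad.
exact: Wbr.
Qed.

Lemma WR j x v : Wj j v -> Wj j (m v x).
Proof.
move: v; apply: (@Wlin j _ j (lnrR x)) => xs y <-.
elim: xs => [|z xs IH] /=; first by have := @Wbr 0 [::] (m y x); apply.
set r := iter_bracket br xs y.
have -> : m (br z r) x = br z (m r x) + iter_bracket br (m z x :: xs) y.
  rewrite /= -/r -!hbr (lnrB _ (lnrR x)) (rc z r x) (rc r z x) (lc z r x).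
  by rewrite [RHS]addrC addrA subrK.
apply: Wadd; first exact: Wad.
exact: Wbr.
Qed.

Lemma Wzero c v : (forall xs y, size xs = c -> iter_bracket br xs y = 0) -> Wj c v -> v = 0.
Proof.
move=> hc; elim=> [|u w _ -> _ ->|u _ ->|xs y hs] //.
- by rewrite addr0.
- by rewrite oppr0.
- exact: hc.
Qed.

Lemma step_R x a j w : (forall v, iter a (m x) v = 0) -> Wj j w ->
  Wj j.+1 (iter a (fun v => m v x) w).
Proof.
move=> ha hw.
suff H : forall i, Wj j.+1 (iter i (fun v => m v x) w - iter i (m x) w).
  by have := H a; rewrite ha subr0.
have hR : forall i, Wj j (iter i (fun v => m v x) w).
  by elim=> [|i IH] //=; apply: WR.
have hL : forall i, Wj j (iter i (m x) w).
  by elim=> [|i IH] //=; apply: WL.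
elim=> [|i IH] /=; first by rewrite subrr; exact: W0.
set Ri := iter i _ w; set Li := iter i _ w.
have -> : m Ri x - m x Li = m x (Ri - Li) - br x Ri.
  by rewrite (lnrB _ (lnrL x)) -hbr opprB [RHS]addrC addrA subrK.
apply: Wsub; [apply: WL; exact: IH | apply: Wad; exact: hR].
Qed.

Lemma step_L x a j w : (forall v, iter a (fun v => m v x) v = 0) -> Wj j w ->
  Wj j.+1 (iter a (m x) w).
Proof.
move=> ha hw.
suff H : forall i, Wj j.+1 (iter i (m x) w - iter i (fun v => m v x) w).
  by have := H a; rewrite ha subr0.
have hR : forall i, Wj j (iter i (fun v => m v x) w).
  by elim=> [|i IH] //=; apply: WR.
have hL : forall i, Wj j (iter i (m x) w).
  by elim=> [|i IH] //=; apply: WL.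
elim=> [|i IH] /=; first by rewrite subrr; exact: W0.
set Li := iter i (m x) w; set Ri := iter i _ w.
have -> : m x Li - m Ri x = m (Li - Ri) x + br x Li.
  by rewrite (lnrB _ (lnrR x)) -hbr [RHS]addrC addrA subrK.
apply: Wadd; [apply: WR; exact: IH | apply: Wad; exact: hL].
Qed.

Lemma main_sec :
  let a := forall x : V, nilpotent_map (Lmul m x) in
  let b := forall x : V, nilpotent_map (Rmul m x) in
  let c := lie_nilpotent br in
  [/\ (a -> b -> c), (a -> c -> b) & (b -> c -> a)].
Proof.
move=> a b c; rewrite /a /b /c; split.
- move=> ha hb.
  have [NL hL] := @nil_bound K V m m1 lnrL lc ha.
  have [NR hR] := @nil_bound K V (fun a v => m v a) (fun a x y v => m2 a v x y)
      lnrR (fun x y v => rc v y x) hb.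
  exists (NL + NR)%N => xs y hs.
  apply: (@Sk_zero (size xs) NL NR hL hR _ _ (Sk_br xs y)).
  by rewrite hs.
- move=> ha [c0 hc] x; have [n hn] := ha x; exists (c0 * n)%N => v.
  have H : forall k, Wj k (iter (k * n) (Rmul m x) v).
    elim=> [|k IH]; first exact: Wall.
    rewrite mulSn iterD; exact: step_R hn IH.
  exact: Wzero hc (H c0).
- move=> hb [c0 hc] x; have [n hn] := hb x; exists (c0 * n)%N => v.
  have H : forall k, Wj k (iter (k * n) (Lmul m x) v).
    elim=> [|k IH]; first exact: Wall.
    rewrite mulSn iterD; exact: step_L hn IH.
  exact: Wzero hc (H c0).
Qed.

End Main.

Theorem mainTheorem2 (K : fieldType) (V : vectType K)
  (br m : V -> V -> V) :
  [pchar K] =i pred0 ->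
  is_lie_bracket br ->
  is_LR_structure br m ->
  let a := forall x : V, nilpotent_map (Lmul m x) in
  let b := forall x : V, nilpotent_map (Rmul m x) in
  let c := lie_nilpotent br in
  [/\ (a -> b -> c), (a -> c -> b) & (b -> c -> a)].
Proof.
move=> _ _ [[[m1 m2] lc rc] hbr].
exact: (@main_sec K V br m m1 m2 lc rc hbr).
Qed.
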